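(* In the setting described in the context (training data $(x^{(k)},\alpha^{(k)})_{1\le k\le N}$ with the associated set functions $e$ and $f$): (1) for all $A,B$ with $\emptyset\neq A\subseteq B\subseteq\mathcal C$, $e(A)\le e(B)$; (2) for all $A,B$ with $A\subseteq B\subsetneq\mathcal C$, $f(A)\le f(B)$.
   Context: Let $\mathcal C=\{1,\dots,n\}$ and let $L$ be either a finite totally ordered set $0=\xi_1<\dots<\xi_l=1$ or $L=[0,1]$. Training data: $N$ pairs $(x^{(k)},\alpha^{(k)})$, $k=1,\dots,N$, with $x^{(k)}=(x^{(k)}_1,\dots,x^{(k)}_n)\in L^n$ and $\alpha^{(k)}\in L$. For nonempty $A\subseteq\mathcal C$ put $m_{k,A}=\min_{i\in A}x^{(k)}_i$; for $A\subsetneq\mathcal C$ put $\gamma_{k,A}=\max_{i\in\mathcal C\setminus A}x^{(k)}_i$. The Gödel implication is $a\to_G b=1$ if $a\le b$ and $a\to_G b=b$ otherwise; the epsilon product is $a\,\epsilon\, b=b$ if $a<b$ and $a\,\epsilon\, b=0$ if $a\ge b$. Define $e(A)=\min_{1\le k\le N}(m_{k,A}\to_G\alpha^{(k)})$ for nonempty $A\subseteq\mathcal C$, and $f(B)=\max_{1\le k\le N}(\gamma_{k,B}\,\epsilon\,\alpha^{(k)})$ for $B\subsetneq\mathcal C$. *)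

(* Defs.v *)
From mathcomp Require Import all_boot all_order.
Set Implicit Arguments. Unset Strict Implicit. Unset Printing Implicit Defensive.
Import Order.TTheory.
Local Open Scope order_scope.

(* L is modelled as an arbitrary bounded totally ordered type (0 = \bot,
   1 = \top); this covers both a finite chain 0 = xi_1 < ... < xi_l = 1
   and the real interval [0,1].  Criteria C = 'I_n, data indices 'I_N. *)

Section Defs.
Context {disp : Order.disp_t} {L : tbOrderType disp}.

Definition godel_impl (a b : L) : L := if a <= b then \top else b.
Definition eps_prod (a b : L) : L := if a < b then b else \bot.

Context {n N : nat} (x : 'I_N -> 'I_n -> L) (alpha : 'I_N -> L).

Definition m_kA (k : 'I_N) (A : {set 'I_n}) : L := \meet_(i in A) x k i.
Definition gamma_kA (k : 'I_N) (A : {set 'I_n}) : L := \join_(i in ~: A) x k i.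

Definition e_fun (A : {set 'I_n}) : L :=
  \meet_(k < N) godel_impl (m_kA k A) (alpha k).
Definition f_fun (B : {set 'I_n}) : L :=
  \join_(k < N) eps_prod (gamma_kA k B) (alpha k).
End Defs.

(* Main.v *)
Require Import Defs.
From mathcomp Require Import all_boot all_order.
Import Order.TTheory.
Local Open Scope order_scope.

Theorem lemma2 (disp : Order.disp_t) (L : tbOrderType disp) (n N : nat)
  (x : 'I_N -> 'I_n -> L) (alpha : 'I_N -> L) :
  (forall A B : {set 'I_n}, A != set0 -> A \subset B ->
     e_fun x alpha A <= e_fun x alpha B) /\
  (forall A B : {set 'I_n}, A \subset B -> B \proper [set: 'I_n] ->
     f_fun x alpha A <= f_fun x alpha B).
Proof.
split.
- move=> A B _ sAB; rewrite /e_fun; apply/meetsP => k _.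
  apply: le_trans (@meets_inf _ _ _ k xpredT (fun k0 => godel_impl (m_kA x k0 A) (alpha k0)) isT) _.
  have hm : m_kA x k B <= m_kA x k A.
    rewrite /m_kA; apply/meetsP => i iA; apply: meets_inf; exact: (subsetP sAB).
  rewrite /godel_impl.
  case: ifP => h1; case: ifP => h2 //; try exact: lex1.
  by rewrite (le_trans hm h1) in h2.
- move=> A B sAB _; rewrite /f_fun; apply/joinsP => k _.
  apply: le_trans _ (@joins_sup _ _ _ k xpredT (fun k0 => eps_prod (gamma_kA x k0 B) (alpha k0)) isT).
  have hg : gamma_kA x k B <= gamma_kA x k A.
    rewrite /gamma_kA; apply/joinsP => i iB; apply: joins_sup.
    move: iB; rewrite !inE; apply: contra; exact: (subsetP sAB).
  rewrite /eps_prod.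
  case: ifP => h1; case: ifP => h2 //; try exact: le0x.
  by rewrite (le_lt_trans hg h1) in h2.
Qed.
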